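(* Let $N>1$ be an integer, let $a<b$ be real numbers, and let $\mathcal{X}=(x_1,\dots,x_N)$ be a finite list of $N$ real numbers in $[a,b]$ with mean $\mu=\frac{1}{N}\sum_{i=1}^N x_i$. Let $0<\epsilon<1$ and $0<\delta<1$, and put $$u=\frac{\log(1/\delta)}{2}\cdot\frac{(b-a)^2}{\epsilon^2}.$$ Let $m$ be an integer with $1\le m<N$ and $$m\ \ge\ \min\left\{\frac{u+1}{1+\frac{u}{N}},\ \frac{u+\frac{u}{N}}{1+\frac{u}{N}}\right\}.$$ Let $(X_1,\dots,X_m)$ be a sample of size $m$ drawn uniformly at random without replacement from $\mathcal{X}$. Then $$\mathbb{P}\left[\frac{1}{m}\sum_{t=1}^m X_t-\mu\le \epsilon\right]\ \ge\ 1-\delta .$$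
   Context: Sampling without replacement from the list $\mathcal{X}$ means choosing $m$ distinct indices uniformly at random from $\{1,\dots,N\}$, in order, and setting $X_t$ to be the entry of $\mathcal{X}$ at the $t$-th chosen index. *)

(* Defs.v *)
From Stdlib Require Import Reals.
From mathcomp Require Import all_boot.
Set Implicit Arguments. Unset Strict Implicit. Unset Printing Implicit Defensive.
Local Open Scope R_scope.

Definition sumR (I : finType) (F : I -> R) : R :=
  foldr Rplus R0 [seq F i | i <- enum I].

Definition meanR (N : nat) (x : 'I_N -> R) : R := sumR x / INR N.

(* Sample space of sampling m items without replacement from 'I_N:
   ordered m-tuples of distinct indices (injective maps 'I_m -> 'I_N),
   each equally likely. *)
Definition wor_space (N m : nat) : {set {ffun 'I_m -> 'I_N}} :=
  [set f : {ffun 'I_m -> 'I_N} | injectiveb f].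

Definition wor_prob (N m : nat) (E : pred {ffun 'I_m -> 'I_N}) : R :=
  INR #|[set f in wor_space N m | E f]| / INR #|wor_space N m|.

Definition dev_le (N m : nat) (x : 'I_N -> R) (eps : R)
  (f : {ffun 'I_m -> 'I_N}) : bool :=
  if Rle_dec (sumR (fun t : 'I_m => x (f t)) / INR m - meanR x) eps
  then true else false.

(* Main.v *)
Require Import Defs.
From Coquelicot Require Import Coquelicot.
From Stdlib Require Import Reals Lra.
From HB Require Import structures.
From mathcomp Require Import all_boot.
Set Implicit Arguments. Unset Strict Implicit. Unset Printing Implicit Defensive.
Open Scope R_scope.

Lemma Rplus_assoc' : associative Rplus. Proof. by move=> *; rewrite Rplus_assoc. Qed.
Lemma Rmult_assoc' : associative Rmult. Proof. by move=> *; rewrite Rmult_assoc. Qed.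
HB.instance Definition _ := Monoid.isComLaw.Build R 0 Rplus Rplus_assoc' Rplus_comm Rplus_0_l.
HB.instance Definition _ := Monoid.isComLaw.Build R 1 Rmult Rmult_assoc' Rmult_comm Rmult_1_l.
HB.instance Definition _ := Monoid.isMulLaw.Build R 0 Rmult Rmult_0_l Rmult_0_r.
HB.instance Definition _ := Monoid.isAddLaw.Build R Rmult Rplus Rmult_plus_distr_r Rmult_plus_distr_l.

Notation "\rsum_ ( i | P ) F" := (\big[Rplus/0]_(i | P) F)
  (at level 36, F at level 36, i at level 50).
Notation "\rsum_ ( i 'in' A ) F" := (\big[Rplus/0]_(i in A) F)
  (at level 36, F at level 36, i, A at level 50).

Lemma rsum_le (I : finType) (P : pred I) (F G : I -> R) :
  (forall i, P i -> F i <= G i) -> \rsum_(i | P i) F i <= \rsum_(i | P i) G i.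
Proof. move=> H; apply: (big_ind2 (fun x y => x <= y)) => //; [lra | move=> *; lra]. Qed.

Lemma rsum_ge0 (I : finType) (P : pred I) (F : I -> R) :
  (forall i, P i -> 0 <= F i) -> 0 <= \rsum_(i | P i) F i.
Proof. move=> H; apply: (big_ind (fun x => 0 <= x)) => //; [lra | move=> *; lra]. Qed.

Lemma rsum_const (I : finType) (P : pred I) (c : R) :
  \rsum_(i | P i) c = INR #|P| * c.
Proof.
rewrite big_const; elim: #|P| => [|n IH] /=; first lra.
rewrite IH; case: n {IH} => [|n] /=; lra.
Qed.

Lemma rsum_mull (I : finType) (P : pred I) (F : I -> R) (c : R) :
  c * \rsum_(i | P i) F i = \rsum_(i | P i) (c * F i)%R.
Proof. by rewrite big_distrr. Qed.

Lemma sumR_big (I : finType) (F : I -> R) : sumR F = \rsum_(i | true) F i.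
Proof. by rewrite /sumR -big_enum /= unlock /reducebig foldr_map. Qed.
Lemma MVT_all (f df : R -> R) (a b : R) :
  (forall x, is_derive f x (df x)) ->
  exists c, Rmin a b <= c <= Rmax a b /\ f b - f a = df c * (b - a).
Proof.
move=> H; apply: MVT_gen.
- by move=> x _; apply: H.
- move=> x _; apply/continuity_pt_filterlim.
  apply: ex_derive_continuous; eexists; apply: H.
Qed.

Lemma exp_le x y : x <= y -> exp x <= exp y.
Proof. case/Rle_lt_or_eq_dec => [H|->]; [apply: Rlt_le; apply: exp_increasing; exact: H | apply: Rle_refl]. Qed.

Lemma hoeff_core (p h : R) : 0 <= p <= 1 ->
  (1 - p) * exp (- (p * h)) + p * exp ((1 - p) * h) <= exp (h ^ 2 / 8).
Proof.
move=> Hp.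
have Dpos : forall t, 0 < 1 - p + p * exp t.
  move=> t; have := exp_pos t => He.
  case: (Req_dec p 0) => [->|Hp0]; first lra.
  have : 0 < p * exp t by apply: Rmult_lt_0_compat; lra.
  lra.
pose D t := 1 - p + p * exp t.
pose g t := t ^ 2 / 8 + p * t - ln (D t).
pose g1 t := t / 4 + p - p * exp t / D t.
pose g2 t := / 4 - p * exp t * (1 - p) / (D t) ^ 2.
have dg : forall t, is_derive g t (g1 t).
  move=> t; rewrite /g /g1 /D; auto_derive; first by have := Dpos t; lra.
  field; have := Dpos t; rewrite /D; lra.
have dg1 : forall t, is_derive g1 t (g2 t).
  move=> t; rewrite /g1 /g2 /D; auto_derive; first by have := Dpos t; lra.
  field; have := Dpos t; rewrite /D; lra.
have g2pos : forall t, 0 <= g2 t.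
  move=> t; rewrite /g2.
  have HD := Dpos t; rewrite -/(D t) in HD.
  have HA : 0 <= p * exp t by apply: Rmult_le_pos; [lra | have := exp_pos t; lra].
  have HDe : D t = p * exp t + (1 - p) by rewrite /D; ring.
  have Hq : p * exp t * (1 - p) / D t ^ 2 <= / 4.
    apply: (Rmult_le_reg_r (D t ^ 2)); first by apply: pow_lt.
    rewrite /Rdiv Rmult_assoc Rinv_l; last by apply: pow_nonzero; lra.
    rewrite HDe; have := pow2_ge_0 (p * exp t - (1 - p)); nra.
  lra.
have Eg0 : g 0 = 0 by rewrite /g /D exp_0; replace (1 - p + p * 1) with 1 by ring; rewrite ln_1; field.
have Eg10 : g1 0 = 0 by rewrite /g1 /D exp_0; replace (1 - p + p * 1) with 1 by ring; field.
have gpos : 0 <= g h.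
  have [c [Hc Hgc]] := @MVT_all g g1 0 h dg.
  have [d [Hd Hgd]] := @MVT_all g1 g2 0 c dg1.
  rewrite Eg0 in Hgc; rewrite Eg10 in Hgd.
  have Hch : 0 <= c * h.
    move: Hc; rewrite /Rmin /Rmax; case: Rle_dec => _ Hc; nra.
  have := g2pos d. nra.
have E : (1 - p) * exp (- (p * h)) + p * exp ((1 - p) * h) = exp (- (p * h)) * D h.
  rewrite /D; replace ((1 - p) * h) with (- (p * h) + h) by ring; rewrite exp_plus; ring.
rewrite E.
have : ln (D h) <= h ^ 2 / 8 + p * h by move: gpos; rewrite /g; lra.
move=> Hl.
have Hd0 := Dpos h. rewrite -/(D h) in Hd0.
rewrite -{1}(exp_ln (D h)) // -exp_plus.
apply: exp_le; lra.
Qed.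

Lemma exp_convex_ab (a b y s : R) : a < b -> a <= y <= b ->
  exp (s * y) <= ((b - y) * exp (s * a) + (y - a) * exp (s * b)) / (b - a).
Proof.
move=> ab Hy.
have e1 := exp_ineq1_le (s * a - s * y).
have e2 := exp_ineq1_le (s * b - s * y).
have Ea : exp (s * a) = exp (s * y) * exp (s * a - s * y).
  by rewrite -exp_plus; f_equal; ring.
have Eb : exp (s * b) = exp (s * y) * exp (s * b - s * y).
  by rewrite -exp_plus; f_equal; ring.
have Hp := exp_pos (s * y).
apply: (Rmult_le_reg_r (b - a)); first lra.
rewrite /Rdiv Rmult_assoc Rinv_l; last lra.
rewrite Rmult_1_r Ea Eb.
have H1 : exp (s * y) * (1 + (s * a - s * y)) <= exp (s * y) * exp (s * a - s * y).
  by apply: Rmult_le_compat_l; lra.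
have H2 : exp (s * y) * (1 + (s * b - s * y)) <= exp (s * y) * exp (s * b - s * y).
  by apply: Rmult_le_compat_l; lra.
have H3 : (b - y) * (exp (s * y) * (1 + (s * a - s * y))) <= (b - y) * (exp (s * y) * exp (s * a - s * y)).
  by apply: Rmult_le_compat_l; lra.
have H4 : (y - a) * (exp (s * y) * (1 + (s * b - s * y))) <= (y - a) * (exp (s * y) * exp (s * b - s * y)).
  by apply: Rmult_le_compat_l; lra.
nra.
Qed.

Lemma hoeff_mu (a b mu s : R) : a < b -> a <= mu <= b ->
  ((b - mu) * exp (s * (a - mu)) + (mu - a) * exp (s * (b - mu))) / (b - a)
  <= exp (s ^ 2 * (b - a) ^ 2 / 8).
Proof.
move=> ab Hm.
have Hp : 0 <= (mu - a) / (b - a) <= 1.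
  split.
    apply: Rmult_le_pos; first lra. apply: Rlt_le; apply: Rinv_0_lt_compat; lra.
  apply: (Rmult_le_reg_r (b - a)); first lra.
  rewrite /Rdiv Rmult_assoc Rinv_l; lra.
have := hoeff_core (s * (b - a)) Hp.
have E1 : (1 - (mu - a) / (b - a)) = (b - mu) / (b - a) by field; lra.
have E2 : - ((mu - a) / (b - a) * (s * (b - a))) = s * (a - mu) by field; lra.
have E3 : (1 - (mu - a) / (b - a)) * (s * (b - a)) = s * (b - mu) by field; lra.
have E4 : (s * (b - a)) ^ 2 / 8 = s ^ 2 * (b - a) ^ 2 / 8 by field.
rewrite E2 E3 E4 E1.
have -> : ((b - mu) * exp (s * (a - mu)) + (mu - a) * exp (s * (b - mu))) / (b - a)
  = (b - mu) / (b - a) * exp (s * (a - mu)) + (mu - a) / (b - a) * exp (s * (b - mu))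
  by field; lra.
done.
Qed.

Lemma rsum_split (I : finType) (P : pred I) (F G : I -> R) :
  \rsum_(i | P i) (F i + G i) = \rsum_(i | P i) F i + \rsum_(i | P i) G i.
Proof. by rewrite big_split. Qed.

Section Sets.
Variable T : finType.
Variable x : T -> R.
Variable lam : R.

Definition sS (S : {set T}) := \rsum_(i in S) x i.
Definition hS (S : {set T}) := exp (lam * sS S).
Definition Ek (A : {set T}) m := \big[Rplus/0]_(S : {set T} | (S \subset A) && (#|S| == m)%N) hS S.

Lemma sS_U1 (i : T) (S : {set T}) : i \notin S -> sS (i |: S) = x i + sS S.
Proof. by move=> iS; rewrite /sS big_setU1. Qed.

Lemma Ek_rec (A : {set T}) (m : nat) :
  INR m.+1 * Ek A m.+1 = \rsum_(i in A) (exp (lam * x i) * Ek (A :\ i) m).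
Proof.
rewrite /Ek rsum_mull.
transitivity (\big[Rplus/0]_(S : {set T} | (S \subset A) && (#|S| == m.+1)%N) \rsum_(i in S) hS S).
  apply: eq_bigr => S /andP [_ /eqP HS].
  by rewrite rsum_const HS.
rewrite (exchange_big_dep (fun i => i \in A)) /=; last first.
  by move=> S i /andP [SA _] iS; apply: (subsetP SA).
apply: eq_bigr => i iA.
rewrite rsum_mull.
rewrite (reindex_onto (fun S => i |: S) (fun S => S :\ i)) /=; last first.
  by move=> S /andP [_ iS]; rewrite setD1K.
apply: eq_big => [S | S].
  have [iS|iS] := boolP (i \in S).
    have -> : ((i |: S) :\ i == S) = false.
      by apply/negbTE; apply/eqP => E; move: iS; rewrite -E setD11.
    by rewrite subsetD1 iS !andbF.
  rewrite setU1K // subsetD1 iS andbT cardsU1 iS add1n eqSS setU11 andbT.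
  by rewrite subUset sub1set iA eqxx andbT.
move=> /andP [_ /eqP E].
have iS : i \notin S by rewrite -E setD11.
by rewrite /hS sS_U1 // Rmult_plus_distr_l exp_plus.
Qed.

Variables a b : R.
Hypothesis Hab : a < b.
Hypothesis Hx : forall i, a <= x i <= b.

Lemma sS_bounds (A : {set T}) : INR #|A| * a <= sS A <= INR #|A| * b.
Proof.
rewrite /sS -!rsum_const; split; apply: rsum_le => i _; have := Hx i; lra.
Qed.

Lemma fin_hoeff (A : {set T}) (s : R) : (0 < #|A|)%N ->
  \rsum_(i in A) exp (s * (x i - sS A / INR #|A|))
  <= INR #|A| * exp (s ^ 2 * (b - a) ^ 2 / 8).
Proof.
move=> A0.
set n := INR #|A|.
have n0 : 0 < n by apply: lt_0_INR; apply/ltP.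
set mu := sS A / n.
have Emu : sS A = n * mu by rewrite /mu; field; lra.
have Hmu : a <= mu <= b.
  have := sS_bounds A; rewrite -/n Emu => [[H1 H2]]; split; nra.
set K1 := exp (s * (a - mu)); set K2 := exp (s * (b - mu)).
pose al := (b * K1 - a * K2) / (b - a); pose be := (K2 - K1) / (b - a).
apply: Rle_trans (_ : \rsum_(i in A) (al + be * x i) <= _).
  apply: rsum_le => i _.
  have := @exp_convex_ab (a - mu) (b - mu) (x i - mu) s ltac:(lra) ltac:(have := Hx i; lra).
  rewrite -/K1 -/K2 /al /be.
  have -> : ((b - mu - (x i - mu)) * K1 + (x i - mu - (a - mu)) * K2) / (b - mu - (a - mu))
    = (b * K1 - a * K2) / (b - a) + (K2 - K1) / (b - a) * x i by field; lra.
  done.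
rewrite rsum_split rsum_const -rsum_mull -/(sS A) -/n Emu.
have := hoeff_mu s Hab Hmu; rewrite -/K1 -/K2 => H.
have -> : n * al + be * (n * mu) = n * (((b - mu) * K1 + (mu - a) * K2) / (b - a))
  by rewrite /al /be; field; lra.
apply: Rmult_le_compat_l; lra.
Qed.

Definition Bf (n m : R) := m * (n - m + 1) / n.

Lemma Bineq (n m : R) : 0 <= m -> m + 2 <= n ->
  Bf (n - 1) m + ((n - 1 - m) / (n - 1)) ^ 2 <= Bf n (m + 1).
Proof.
move=> m0 mn; rewrite /Bf.
have -> : (m + 1) * (n - (m + 1) + 1) / n =
  m * (n - 1 - m + 1) / (n - 1) + ((n - 1 - m) / (n - 1)) ^ 2
  + m * (n - 1 - m) / (n * (n - 1) ^ 2) by field; lra.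
have : 0 <= m * (n - 1 - m) / (n * (n - 1) ^ 2).
  apply: Rmult_le_pos; first nra.
  apply: Rlt_le; apply: Rinv_0_lt_compat; apply: Rmult_lt_0_compat; first lra.
  apply: pow_lt; lra.
lra.
Qed.

Lemma Ek0 (A : {set T}) : Ek A 0%N = 1.
Proof.
rewrite /Ek (big_pred1 set0); last first.
  by move=> S; rewrite /= cards_eq0; case: eqP => [->|]; rewrite ?sub0set ?andbF.
by rewrite /hS /sS big_set0 Rmult_0_r exp_0.
Qed.

Lemma mgf (m : nat) : forall A : {set T}, (m < #|A|)%N ->
  Ek A m <= INR 'C(#|A|, m) *
    exp (lam * INR m * (sS A / INR #|A|) + lam ^ 2 * (b - a) ^ 2 * Bf (INR #|A|) (INR m) / 8).
Proof.
elim: m => [|m IH] A mA.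
  rewrite Ek0 bin0 /Bf /=.
  have -> : lam * 0 * (sS A / INR #|A|) + lam ^ 2 * (b - a) ^ 2 * (0 * (INR #|A| - 0 + 1) / INR #|A|) / 8 = 0
    by rewrite /Rdiv; ring.
  rewrite exp_0; lra.
set n := #|A|.
have n2 : (m.+2 <= n)%N by [].
have n0 : (0 < n)%N by apply: leq_trans n2.
set nR := INR n.
have HnR : INR m + 2 <= nR.
  rewrite /nR -(plus_INR m 2); apply: le_INR; apply/leP; rewrite plusE addn2 //.
have Hm0 := pos_INR m.
have Hm1 : 0 < INR m.+1 by rewrite S_INR; lra.
have EnR1 : INR n.-1 = nR - 1 by rewrite /nR -{2}(prednK n0) S_INR; ring.
set mu := sS A / nR.
have Emu : sS A = nR * mu by rewrite /mu; field; lra.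
set Q := lam ^ 2 * (b - a) ^ 2 * Bf (nR - 1) (INR m) / 8.
set s := lam * (nR - 1 - INR m) / (nR - 1).
set C := INR 'C(n.-1, m).
have C0 : 0 <= C by apply: pos_INR.
apply: (Rmult_le_reg_l (INR m.+1)) => //.
rewrite Ek_rec.
apply: Rle_trans (_ : \rsum_(i in A) (C * exp Q * exp (lam * (INR m + 1) * mu) * exp (s * (x i - mu))) <= _).
  apply: rsum_le => i iA.
  have cardD : #|A :\ i| = n.-1.
    by rewrite /n (cardsD1 i A) iA.
  have := IH (A :\ i); rewrite cardD => IHi.
  have {IHi} IHi := IHi ltac:(by rewrite -ltnS prednK).
  have EsS : sS (A :\ i) = sS A - x i.
    have := @sS_U1 i (A :\ i) ltac:(by rewrite setD11); rewrite setD1K // => ->; ring.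
  rewrite EsS EnR1 -/C -/Q in IHi.
  apply: Rle_trans (_ : exp (lam * x i) * (C * exp (lam * INR m * ((sS A - x i) / (nR - 1)) + Q)) <= _).
    apply: Rmult_le_compat_l => //; apply: Rlt_le; apply: exp_pos.
  right.
  have E : lam * x i + (lam * INR m * ((sS A - x i) / (nR - 1)) + Q)
    = Q + lam * (INR m + 1) * mu + s * (x i - mu) by rewrite Emu /s; field; lra.
  transitivity (C * exp (lam * x i + (lam * INR m * ((sS A - x i) / (nR - 1)) + Q))).
    by rewrite [in RHS]exp_plus; ring.
  by rewrite E !exp_plus; ring.
rewrite -rsum_mull.
apply: Rle_trans (_ : C * exp Q * exp (lam * (INR m + 1) * mu) * (nR * exp (s ^ 2 * (b - a) ^ 2 / 8)) <= _).
  apply: Rmult_le_compat_l.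
    apply: Rmult_le_pos; [apply: Rmult_le_pos => //; apply: Rlt_le; apply: exp_pos | apply: Rlt_le; apply: exp_pos].
  exact: fin_hoeff.
have Ebin : INR m.+1 * INR 'C(n, m.+1) = nR * C.
  by rewrite -!mult_INR /nR /C; congr INR; rewrite !multE mul_bin_diag.
rewrite -[X in _ <= X]Rmult_assoc Ebin !S_INR.
have -> : C * exp Q * exp (lam * (INR m + 1) * mu) * (nR * exp (s ^ 2 * (b - a) ^ 2 / 8))
  = nR * C * exp (lam * (INR m + 1) * mu + (Q + s ^ 2 * (b - a) ^ 2 / 8)).
  rewrite !exp_plus; ring.
apply: Rmult_le_compat_l.
  apply: Rmult_le_pos => //; lra.
apply: exp_le.
apply: Rplus_le_compat_l.
have EQ : Q + s ^ 2 * (b - a) ^ 2 / 8 = lam ^ 2 * (b - a) ^ 2 / 8 *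
   (Bf (nR - 1) (INR m) + ((nR - 1 - INR m) / (nR - 1)) ^ 2) by rewrite /Q /s; field; lra.
rewrite EQ.
have -> : lam ^ 2 * (b - a) ^ 2 * Bf nR (INR m + 1) / 8 = lam ^ 2 * (b - a) ^ 2 / 8 * Bf nR (INR m + 1) by field.
apply: Rmult_le_compat_l.
  have := pow2_ge_0 lam; have := pow2_ge_0 (b - a); nra.
apply: Bineq; lra.
Qed.

End Sets.

Lemma tail (T : finType) (x : T -> R) (a b : R) (Hab : a < b)
  (Hx : forall i, a <= x i <= b) (k : nat) (t : R) :
  (0 < k)%N -> (k < #|T|)%N -> 0 < t ->
  \big[Rplus/0]_(S : {set T} | #|S| == k)
     (if Rlt_dec t (sS x S - INR k * (sS x setT / INR #|T|)) then 1 else 0)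
  <= INR 'C(#|T|, k) * exp (- (2 * t ^ 2 / ((b - a) ^ 2 * Bf (INR #|T|) (INR k)))).
Proof.
move=> k0 kn t0.
set n := #|T|.
have n0 : (0 < n)%N by apply: leq_trans kn.
have nR0 : 0 < INR n by apply: lt_0_INR; apply/ltP.
have kR0 : 0 < INR k by apply: lt_0_INR; apply/ltP.
have knR : INR k < INR n by apply: lt_INR; apply/ltP.
have B0 : 0 < Bf (INR n) (INR k).
  rewrite /Bf /Rdiv; apply: Rmult_lt_0_compat; [apply: Rmult_lt_0_compat; lra | apply: Rinv_0_lt_compat; lra].
set B := Bf (INR n) (INR k).
set mu := sS x setT / INR n.
have c0 : 0 < (b - a) ^ 2 by apply: pow_lt; lra.
set lam := 4 * t / ((b - a) ^ 2 * B).
have lam0 : 0 <= lam.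
  rewrite /lam; apply: Rlt_le; apply: Rmult_lt_0_compat; first lra.
  apply: Rinv_0_lt_compat; apply: Rmult_lt_0_compat; [exact: c0 | exact: B0].
apply: Rle_trans (_ : \big[Rplus/0]_(S : {set T} | (S \subset setT) && (#|S| == k))
    (exp (- (lam * (INR k * mu + t))) * hS x lam S) <= _).
  rewrite (eq_bigl (fun S : {set T} => (S \subset setT) && (#|S| == k))); last first.
    by move=> S; rewrite subsetT.
  apply: rsum_le => S _.
  rewrite /hS -exp_plus.
  case: Rlt_dec => H.
    rewrite -exp_0; apply: exp_le.
    have : 0 <= lam * (sS x S - INR k * mu - t) by apply: Rmult_le_pos; lra.
    lra.
  apply: Rlt_le; apply: exp_pos.
rewrite -rsum_mull -/(Ek x lam setT k).
have := @mgf T x lam a b Hab Hx k setT; rewrite cardsT -/n -/mu => /(_ kn) H.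
apply: Rle_trans (_ : exp (- (lam * (INR k * mu + t))) * (INR 'C(n, k) *
   exp (lam * INR k * mu + lam ^ 2 * (b - a) ^ 2 * B / 8)) <= _).
  by apply: Rmult_le_compat_l => //; apply: Rlt_le; apply: exp_pos.
rewrite Rmult_comm Rmult_assoc -exp_plus.
apply: Rmult_le_compat_l; first by apply: pos_INR.
right; congr exp.
rewrite /lam; field; split; [exact: (Rgt_not_eq _ _ B0) | lra].
Qed.

Lemma card_fiber (T : finType) (m : nat) (S : {set T}) : #|S| = m ->
  #|[pred f : {ffun 'I_m -> T} | injectiveb f && (f @: 'I_m == S)]| = m`!.
Proof.
move=> Sm.
rewrite -ffactnn; have := @card_inj_ffuns_on 'I_m T (mem S); rewrite card_ord Sm => <-.
apply: eq_card => f; rewrite !inE.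
apply/andP/andP => [[/injectiveP inj_f /eqP im_f] | [/ffun_onP f_on /injectiveP inj_f]].
  split; last exact/injectiveP.
  by apply/ffun_onP => i; rewrite -im_f imset_f.
split; first exact/injectiveP.
rewrite eqEcard card_imset // card_ord Sm leqnn andbT.
by apply/subsetP => y /imsetP [i _ ->]; apply: f_on.
Qed.

Lemma inj_to_sets (T : finType) (m : nat) (w : {set T} -> R) :
  \big[Rplus/0]_(f : {ffun 'I_m -> T} | injectiveb f) w (f @: 'I_m)
  = INR m`! * \big[Rplus/0]_(S : {set T} | #|S| == m) w S.
Proof.
rewrite (partition_big (fun f : {ffun 'I_m -> T} => f @: 'I_m) (fun S : {set T} => #|S| == m)) /=; last first.
  by move=> f /injectiveP inj_f; rewrite card_imset // card_ord.
rewrite rsum_mull; apply: eq_bigr => S /eqP Sm.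
rewrite (eq_bigr (fun _ => w S)); last by move=> f /andP [_ /eqP ->].
by rewrite rsum_const card_fiber // Rmult_comm.
Qed.

Lemma arith1 (N m L c2 e : R) : 0 < N -> 1 <= m -> m < N -> 0 < L -> 0 < c2 -> 0 < e ->
  m >= (L / 2 * (c2 / e ^ 2) + L / 2 * (c2 / e ^ 2) / N) / (1 + L / 2 * (c2 / e ^ 2) / N) ->
  L <= 2 * (m * e) ^ 2 / (c2 * (m * (N - m + 1) / N)).
Proof.
move=> N0 m1 mN L0 c0 e0.
set u := L / 2 * (c2 / e ^ 2).
have u0 : 0 < u by rewrite /u; apply: Rmult_lt_0_compat; [lra | apply: Rmult_lt_0_compat; [lra | apply: Rinv_0_lt_compat; apply: pow_lt; lra]].
have uN : 0 < u / N by apply: Rmult_lt_0_compat; [lra | apply: Rinv_0_lt_compat; lra].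
have D0 : 0 < 1 + u / N by lra.
move=> H.
have H1 : m * (1 + u / N) >= u + u / N.
  have E : u + u / N = (u + u / N) / (1 + u / N) * (1 + u / N) by field; lra.
  rewrite E; apply: Rle_ge; apply: Rmult_le_compat_r; lra.
have H2 : m * N >= u * (N - m + 1).
  have E1 : m * N = m * (1 + u / N) * N - m * u by field; lra.
  have E2 : (u + u / N) * N = u * N + u by field; lra.
  have : m * (1 + u / N) * N >= (u + u / N) * N by apply: Rle_ge; apply: Rmult_le_compat_r; lra.
  rewrite E2 => H3; rewrite E1; lra.
have Eu : L = 2 * u * e ^ 2 / c2 by rewrite /u; field; lra.
have E : 2 * (m * e) ^ 2 / (c2 * (m * (N - m + 1) / N)) = 2 * e ^ 2 / c2 * (m * N / (N - m + 1)).
  field; repeat split; lra.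
rewrite Eu E.
have -> : 2 * u * e ^ 2 / c2 = 2 * e ^ 2 / c2 * u by field; lra.
apply: Rmult_le_compat_l.
  apply: Rmult_le_pos; [have := pow2_ge_0 e; lra | apply: Rlt_le; apply: Rinv_0_lt_compat; lra].
apply: (Rmult_le_reg_r (N - m + 1)); first lra.
have -> : m * N / (N - m + 1) * (N - m + 1) = m * N by field; lra.
lra.
Qed.

Lemma arith2 (N m L c2 e : R) : 0 < N -> 1 <= m -> m < N -> 0 < L -> 0 < c2 -> 0 < e ->
  m >= (L / 2 * (c2 / e ^ 2) + 1) / (1 + L / 2 * (c2 / e ^ 2) / N) ->
  L <= 2 * (m * e) ^ 2 / (c2 * ((N - m) * (N - (N - m) + 1) / N)).
Proof.
move=> N0 m1 mN L0 c0 e0.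
set u := L / 2 * (c2 / e ^ 2).
have u0 : 0 < u by rewrite /u; apply: Rmult_lt_0_compat; [lra | apply: Rmult_lt_0_compat; [lra | apply: Rinv_0_lt_compat; apply: pow_lt; lra]].
have uN : 0 < u / N by apply: Rmult_lt_0_compat; [lra | apply: Rinv_0_lt_compat; lra].
have D0 : 0 < 1 + u / N by lra.
move=> H.
have H1 : m * (1 + u / N) >= u + 1.
  have E : u + 1 = (u + 1) / (1 + u / N) * (1 + u / N) by field; lra.
  rewrite E; apply: Rle_ge; apply: Rmult_le_compat_r; lra.
have H2 : u * (N - m) <= N * (m - 1).
  have E1 : m * (1 + u / N) * N = m * N + m * u by field; lra.
  have : m * (1 + u / N) * N >= (u + 1) * N by apply: Rle_ge; apply: Rmult_le_compat_r; lra.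
  rewrite E1 => H3; lra.
have H3 : u * ((N - m) * (m + 1)) <= m * m * N.
  have : u * (N - m) * (m + 1) <= N * (m - 1) * (m + 1) by apply: Rmult_le_compat_r; lra.
  nra.
have Eu : L = 2 * u * e ^ 2 / c2 by rewrite /u; field; lra.
have E : 2 * (m * e) ^ 2 / (c2 * ((N - m) * (N - (N - m) + 1) / N))
   = 2 * e ^ 2 / c2 * (m * m * N / ((N - m) * (m + 1))).
  field; repeat split; lra.
rewrite Eu E.
have -> : 2 * u * e ^ 2 / c2 = 2 * e ^ 2 / c2 * u by field; lra.
apply: Rmult_le_compat_l.
  apply: Rmult_le_pos; [have := pow2_ge_0 e; lra | apply: Rlt_le; apply: Rinv_0_lt_compat; lra].
apply: (Rmult_le_reg_r ((N - m) * (m + 1))); first by apply: Rmult_lt_0_compat; lra.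
have -> : m * m * N / ((N - m) * (m + 1)) * ((N - m) * (m + 1)) = m * m * N by field; lra.
lra.
Qed.

Lemma exp_le_delta (X delta : R) : 0 < delta -> ln (1 / delta) <= X -> exp (- X) <= delta.
Proof.
move=> d0 H; rewrite -[X in _ <= X](exp_ln delta) //; apply: exp_le.
move: H; rewrite /Rdiv Rmult_1_l ln_Rinv //; lra.
Qed.

Lemma rsum_sub (I : finType) (P : pred I) (F G : I -> R) :
  \rsum_(i | P i) (F i - G i) = \rsum_(i | P i) F i - \rsum_(i | P i) G i.
Proof.
rewrite /Rminus rsum_split; congr Rplus.
transitivity (\rsum_(i | P i) (-1 * G i)); first by apply: eq_bigr => i _; ring.
by rewrite -rsum_mull; ring.
Qed.

Lemma sS_opp (T : finType) (x : T -> R) (S : {set T}) : sS (fun i => - x i) S = - sS x S.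
Proof.
rewrite /sS; transitivity (\rsum_(i in S) (-1 * x i)); first by apply: eq_bigr => i _; ring.
by rewrite -rsum_mull; ring.
Qed.

Lemma sS_setC (T : finType) (x : T -> R) (S : {set T}) : sS x (~: S) = sS x setT - sS x S.
Proof. rewrite /sS (big_setID (A := setT) S) /= setTI setTD; ring. Qed.

Theorem lemma1 (N : nat) (a b : R) (x : 'I_N -> R) (eps delta : R) (m : nat) :
  (1 < N)%N -> a < b ->
  (forall i : 'I_N, a <= x i <= b) ->
  0 < eps < 1 -> 0 < delta < 1 ->
  (1 <= m)%N -> (m < N)%N ->
  let u := ln (1 / delta) / 2 * ((b - a) ^ 2 / eps ^ 2) in
  INR m >= Rmin ((u + 1) / (1 + u / INR N)) ((u + u / INR N) / (1 + u / INR N)) ->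
  @wor_prob N m (@dev_le N m x eps) >= 1 - delta.
Proof.
move=> HN Hab Hx Heps Hdel Hm1 HmN u Hmin.
have m0 : (0 < m)%N by [].
have mN : (m <= N)%N by apply: ltnW.
have N0 : (0 < N)%N by apply: leq_trans HmN.
have NR0 : 0 < INR N by apply: lt_0_INR; apply/ltP.
have mR1 : 1 <= INR m by apply: (le_INR 1); apply/leP.
have mRN : INR m < INR N by apply: lt_INR; apply/ltP.
set mu := meanR x.
have Emu : mu = sS x setT / INR N.
  rewrite /mu /meanR sumR_big /sS; congr (_ / _); apply: eq_bigl => i; by rewrite inE.
pose badS (S : {set 'I_N}) := if Rlt_dec (INR m * eps) (sS x S - INR m * mu) then 1 else 0.
have Hsum : forall f : {ffun 'I_m -> 'I_N}, injectiveb f ->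
    sumR (fun t => x (f t)) = sS x (f @: 'I_m).
  move=> f /injectiveP inj; rewrite sumR_big /sS big_imset /=; last by move=> i j _ _ /inj.
  by apply: eq_bigl => i.
have Hgood : forall f : {ffun 'I_m -> 'I_N}, injectiveb f ->
    (if dev_le x eps f then 1 else 0) = 1 - badS (f @: 'I_m).
  move=> f inj; rewrite /dev_le /badS Hsum // -/mu.
  set s := sS x _.
  have E : s / INR m - mu = (s - INR m * mu) / INR m by field; lra.
  rewrite E.
  case: Rle_dec => H1; case: Rlt_dec => H2 /=; try lra.
    exfalso; have : (s - INR m * mu) / INR m * INR m <= eps * INR m by apply: Rmult_le_compat_r; lra.
    have -> : (s - INR m * mu) / INR m * INR m = s - INR m * mu by field; lra.
    lra.
  exfalso; apply: H1.
  apply: (Rmult_le_reg_r (INR m)); first lra.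
  have -> : (s - INR m * mu) / INR m * INR m = s - INR m * mu by field; lra.
  lra.
have HW1 : INR #|wor_space N m| = \big[Rplus/0]_(f : {ffun 'I_m -> 'I_N} | injectiveb f) 1.
  rewrite rsum_const Rmult_1_r; congr INR; apply: eq_card => f; by rewrite inE.
have HC : \big[Rplus/0]_(S : {set 'I_N} | #|S| == m) 1 = INR 'C(N, m).
  rewrite rsum_const Rmult_1_r; have := card_draws 'I_N m; rewrite card_ord => <-; congr INR; apply: eq_card => S; by rewrite inE.
have HW : INR #|wor_space N m| = INR m`! * INR 'C(N, m).
  rewrite HW1; have := inj_to_sets m (fun _ : {set 'I_N} => 1); rewrite /= => ->.
  by rewrite HC.
have HG : INR #|[set f in wor_space N m | dev_le x eps f]| =
    INR m`! * INR 'C(N, m) - INR m`! * \big[Rplus/0]_(S : {set 'I_N} | #|S| == m) badS S.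
  transitivity (\big[Rplus/0]_(f : {ffun 'I_m -> 'I_N} | injectiveb f) (if dev_le x eps f then 1 else 0)).
    rewrite -big_mkcondr rsum_const Rmult_1_r; congr INR; apply: eq_card => f; by rewrite !inE.
  rewrite (eq_bigr (fun f : {ffun 'I_m -> 'I_N} => 1 - badS (f @: 'I_m))); last exact: Hgood.
  rewrite rsum_sub -HW1 HW; congr Rminus.
  exact: inj_to_sets.
have C0 : 0 < INR 'C(N, m) by apply: lt_0_INR; apply/ltP; rewrite bin_gt0.
have F0 : 0 < INR m`! by apply: lt_0_INR; apply/ltP; apply: fact_gt0.
have L0 : 0 < ln (1 / delta).
  rewrite /Rdiv Rmult_1_l ln_Rinv; last lra.
  have : ln delta < ln 1 by apply: ln_increasing; lra.
  rewrite ln_1; lra.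
have c0 : 0 < (b - a) ^ 2 by apply: pow_lt; lra.
have me0 : 0 < INR m * eps by apply: Rmult_lt_0_compat; lra.
have Hbad : \big[Rplus/0]_(S : {set 'I_N} | #|S| == m) badS S <= delta * INR 'C(N, m).
  move: Hmin; rewrite /Rmin; case: Rle_dec => _ Hmin.
  -
    pose y := fun i : 'I_N => - x i.
    have Hy : forall i, - b <= y i <= - a by move=> i; have := Hx i; rewrite /y; lra.
    rewrite (reindex_inj (@setC_inj 'I_N)) /=.
    rewrite (eq_bigl (fun S : {set 'I_N} => #|S| == (N - m)%N)); last first.
      move=> S; have := cardsC S; rewrite card_ord => E.
      apply/eqP/eqP => H.
        by apply/eqP; rewrite -(eqn_add2r m) subnK // -{1}H E.
      by apply/eqP; rewrite -(eqn_add2l #|S|) E H subnK.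
    rewrite (eq_bigr (fun S : {set 'I_N} => if Rlt_dec (INR m * eps)
        (sS y S - INR (N - m) * (sS y setT / INR N)) then 1 else 0)); last first.
      move=> S _; rewrite /badS.
      have -> : sS x (~: S) - INR m * mu = sS y S - INR (N - m) * (sS y setT / INR N).
        rewrite sS_setC /y !sS_opp minus_INR; last by apply/leP.
        rewrite Emu; field; lra.
      by [].
    have Nm0 : (0 < N - m)%N by rewrite subn_gt0.
    have NmN : (N - m < N)%N by rewrite ltn_subrL m0 N0.
    have := tail (x := y) (a := - b) (b := - a) ltac:(lra) Hy (k := (N - m)%N) (t := INR m * eps) Nm0 ltac:(by rewrite card_ord) me0.
    rewrite card_ord bin_sub // => H.
    apply: Rle_trans H _.
    rewrite Rmult_comm; apply: Rmult_le_compat_r; first lra.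
    apply: exp_le_delta; first lra.
    have -> : (- a - - b) = b - a by ring.
    rewrite /Bf minus_INR; last by apply/leP.
    apply: arith2 => //; lra.
  - have := tail Hab Hx (k := m) (t := INR m * eps) m0 ltac:(by rewrite card_ord) me0.
    rewrite card_ord -Emu => H.
    apply: Rle_trans H _.
    rewrite Rmult_comm; apply: Rmult_le_compat_r; first lra.
    apply: exp_le_delta; first lra.
    rewrite /Bf; apply: arith1 => //; lra.
rewrite /wor_prob HG HW.
apply: Rle_ge.
apply: (Rmult_le_reg_r (INR m`! * INR 'C(N, m))); first by apply: Rmult_lt_0_compat.
have -> : (INR m`! * INR 'C(N, m) - INR m`! * \big[Rplus/0]_(S : {set 'I_N} | #|S| == m) badS S) /
    (INR m`! * INR 'C(N, m)) * (INR m`! * INR 'C(N, m)) =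
    INR m`! * INR 'C(N, m) - INR m`! * \big[Rplus/0]_(S : {set 'I_N} | #|S| == m) badS S.
  field; split; lra.
have : INR m`! * \big[Rplus/0]_(S : {set 'I_N} | #|S| == m) badS S <= INR m`! * (delta * INR 'C(N, m)).
  by apply: Rmult_le_compat_l; lra.
nra.
Qed.
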